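(* Let $r>1$ and integers $N,K\ge1$. Let $\gamma(r,K,N)$ be the supremum of $$\frac{p^K}{z^K}\sum_{i=1}^{K-1}\frac{z^i}{\sum_{j=i}^Kp^j}$$ over all $p=(p^1,\dots,p^K)$ with $rp^K\ge1$, $\sum_{i=1}^Kp^i=1$, $p^i>0$ for all $i$, where $z^i=(\sum_{j=1}^ip^j)^N-(\sum_{j=1}^{i-1}p^j)^N$. Then $\eta(r,K,N)=\gamma(r,K,N)/(1+\gamma(r,K,N))$.
   Context: Single item auction with $N$ buyers whose values are i.i.d., each taking values $0<x^1<\dots<x^K$ with probabilities $p^i>0$, $\sum_ip^i=1$. With $z^i$ as in the claim and reserve index $t(x,p)=\max\{i: i\in\arg\max_{1\le k\le K}x^k\sum_{j=k}^Kp^j\}$, the efficiency loss ratio of the welfare-maximizing revenue-optimal auction is $\mathrm{ELR}_N(x,p)=\sum_{i=1}^{t(x,p)-1}z^ix^i/\sum_{i=1}^Kz^ix^i$. $\eta(r,K,N)$ is the supremum of $\mathrm{ELR}_N(x,p)$ over all such $p$ and all $x$ with $0<x^1<\dots<x^K\le rx^1$. *)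

(* Defs.v *)
From HB Require Import structures.
From mathcomp Require Import all_boot all_order all_algebra.
From mathcomp Require Import boolp classical_sets reals.
Set Implicit Arguments. Unset Strict Implicit. Unset Printing Implicit Defensive.
Import Order.TTheory GRing.Theory Num.Theory.
Local Open Scope ring_scope.
Local Open Scope classical_set_scope.

(* Vectors x = (x^1..x^K), p = (p^1..p^K) are functions nat -> R;
   only indices 1..K are used. *)

Section Auction.
Variable R : realType.

Definition cumP (p : nat -> R) (i : nat) : R := \sum_(1 <= j < i.+1) p j.

Definition tailP (p : nat -> R) (K k : nat) : R := \sum_(k <= j < K.+1) p j.

Definition zz (N : nat) (p : nat -> R) (i : nat) : R :=
  cumP p i ^+ N - cumP p i.-1 ^+ N.

Definition is_prob (K : nat) (p : nat -> R) : Prop :=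
  (forall i, (1 <= i <= K)%N -> 0 < p i) /\ \sum_(1 <= i < K.+1) p i = 1.

Definition is_support (r : R) (K : nat) (x : nat -> R) : Prop :=
  0 < x 1%N /\ (forall i, (1 <= i < K)%N -> x i < x i.+1) /\ x K <= r * x 1%N.

Definition reserve_idx (K : nat) (x p : nat -> R) : nat :=
  \max_(1 <= i < K.+1 |
     all (fun k => (x k * tailP p K k <= x i * tailP p K i)%R) (index_iota 1 K.+1)) i.

Definition ELR (K N : nat) (x p : nat -> R) : R :=
  (\sum_(1 <= i < reserve_idx K x p) zz N p i * x i) /
  (\sum_(1 <= i < K.+1) zz N p i * x i).

Definition eta_ELR (r : R) (K N : nat) : R :=
  sup [set e | exists x p, is_prob K p /\ is_support r K x /\ e = ELR K N x p].

Definition gamma_obj (K N : nat) (p : nat -> R) : R :=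
  p K / zz N p K * \sum_(1 <= i < K) zz N p i / tailP p K i.

Definition gamma_sup (r : R) (K N : nat) : R :=
  sup [set g | exists p, is_prob K p /\ 1 <= r * p K /\ g = gamma_obj K N p].

End Auction.

(* Main.v *)
Require Import Defs.
From HB Require Import structures.
From mathcomp Require Import all_boot all_order all_algebra.
From mathcomp Require Import boolp classical_sets reals.
From mathcomp Require Import ring lra zify.
Import Order.TTheory GRing.Theory Num.Theory.
Local Open Scope ring_scope.

Section S.
Variable R : realType.
Implicit Types p x : nat -> R.

Lemma sum_nat_ge0 a b (F : nat -> R) : (forall i, (a <= i < b)%N -> 0 <= F i) -> 0 <= \sum_(a<=i<b) F i.
Proof. move=> H; rewrite big_seq_cond; apply: sumr_ge0 => i /andP[]; rewrite mem_index_iota => /H //. Qed.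

Lemma ler_sum_nat a b (F G : nat -> R) : (forall i, (a <= i < b)%N -> F i <= G i) ->
  \sum_(a<=i<b) F i <= \sum_(a<=i<b) G i.
Proof. move=> H; rewrite big_seq_cond [X in _ <= X]big_seq_cond; apply: ler_sum => i /andP[]; rewrite mem_index_iota => /H //. Qed.

Lemma cumP0 p : cumP p 0 = 0. Proof. by rewrite /cumP big_geq. Qed.
Lemma cumPS p i : cumP p i.+1 = cumP p i + p i.+1. Proof. by rewrite /cumP big_nat_recr. Qed.

Lemma cum_split p i j : (i <= j)%N -> cumP p j = cumP p i + \sum_(i.+1 <= k < j.+1) p k.
Proof. by move=> ij; rewrite /cumP (big_cat_nat _ (n:=i.+1)). Qed.

Lemma tail_cum p K j : (1 <= j <= K.+1)%N -> tailP p K j = cumP p K - cumP p j.-1.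
Proof.
case: j => // j /andP[_ jK]. rewrite /= (@cum_split p j K jK) /tailP; ring.
Qed.

Lemma zz_sum N p a b : (a <= b)%N -> \sum_(a <= k < b) zz N p k = cumP p b.-1 ^+ N - cumP p a.-1 ^+ N.
Proof. by move=> ab; apply: (@telescope_sumr_eq _ a b (fun j => cumP p j.-1 ^+ N)). Qed.

Section Nonneg.
Variables (K : nat) (p : nat -> R).
Hypothesis p0 : forall i, (1 <= i <= K)%N -> 0 <= p i.

Lemma cum_ge0 i : (i <= K)%N -> 0 <= cumP p i.
Proof. move=> iK; apply: sum_nat_ge0 => k /andP[k1 kK]; apply: p0; rewrite k1 /=; lia. Qed.

Lemma cum_le i j : (i <= j <= K)%N -> cumP p i <= cumP p j.
Proof.
move=> /andP[ij jK]; rewrite (@cum_split p i j ij) lerDl; apply: sum_nat_ge0 => k /andP[k1 kK]; apply: p0; lia.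
Qed.

Lemma zz_ge0 N i : (i <= K)%N -> 0 <= zz N p i.
Proof.
move=> iK; rewrite /zz subr_ge0; apply: lerXn2r; rewrite ?nnegrE; try apply: cum_ge0; try lia.
apply: cum_le; lia.
Qed.

Lemma tail_le j k : (1 <= j)%N -> (j <= k <= K.+1)%N -> tailP p K k <= tailP p K j.
Proof.
move=> j1 /andP[jk kK]; rewrite /tailP (big_cat_nat (n:=k) jk kK) /= lerDr.
apply: sum_nat_ge0 => i /andP[ji ik]; apply: p0; lia.
Qed.

End Nonneg.

Section Pos.
Variables (K : nat) (p : nat -> R).
Hypothesis ppos : forall i, (1 <= i <= K)%N -> 0 < p i.
Hypothesis psum : cumP p K = 1.
Let p0 : forall i, (1 <= i <= K)%N -> 0 <= p i.
Proof. by move=> i /ppos/ltW. Qed.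

Lemma tailK : tailP p K K = p K.
Proof. by rewrite /tailP big_nat1. Qed.

Lemma tail_gt0 j : (1 <= j <= K)%N -> 0 < tailP p K j.
Proof.
move=> /andP[j1 jK]; apply: (lt_le_trans _ (@tail_le K p p0 j K j1 _)); last by lia.
by rewrite tailK ppos //; lia.
Qed.


Lemma cum_le1 i : (i <= K)%N -> cumP p i <= 1.
Proof. by move=> iK; rewrite -psum; apply: (@cum_le K p p0); rewrite iK leqnn. Qed.

Lemma cumKm1 : (1 <= K)%N -> cumP p K.-1 = 1 - p K.
Proof. by case: K psum => // k; rewrite cumPS => <- _ /=; ring. Qed.

Lemma zzK_gt0 N : (1 <= N)%N -> (1 <= K)%N -> 0 < zz N p K.
Proof.
move=> N1 K1; rewrite /zz psum expr1n subr_gt0 exprn_ilt1; first by case: N N1.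
  by apply: (@cum_ge0 K p p0); lia.
by rewrite cumKm1 // ltrBlDr ltrDl ppos // K1 leqnn.
Qed.

Lemma tail1 : tailP p K 1 = 1.
Proof. exact: psum. Qed.

End Pos.

Lemma supp_pos_mono r K x : is_support r K x ->
  forall j, (1 <= j <= K)%N -> 0 < x j /\ forall i, (1 <= i <= j)%N -> x i <= x j.
Proof.
move=> [x1 [xinc _]]; elim=> // j IH /andP[j1 jK].
case: j IH j1 jK => [|j] IH _ jK.
  by split=> // i /andP[i1 i0]; have -> : i = 1%N by lia.
have [xj xle] := IH (ltac:(lia)).
have xlt : x j.+1 < x j.+2 by apply: xinc; lia.
split; first exact: lt_trans xlt.
move=> i /andP[i1 ij]; case: (ltngtP i j.+2) => [ilt|igt|->]; [|lia|by []].
apply: le_trans (ltW xlt); apply: xle; lia.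
Qed.

Lemma max_filter (s : seq nat) (P : pred nat) : has P s ->
  P (\max_(i <- s | P i) i) && (\max_(i <- s | P i) i \in s).
Proof.
elim: s => //= a s IH; rewrite big_cons in_cons.
case Pa: (P a) => /=.
  case hs: (has P s).
    move: (IH hs) => /andP[Pm ms] _.
    case: (leqP a (\max_(i <- s | P i) i)) => h.
      by rewrite Pm ms orbT.
    by rewrite Pa eqxx.
  by rewrite big_hasC ?hs // maxn0 Pa eqxx.
by move=> /IH /andP[-> ->]; rewrite orbT.
Qed.

Lemma argmax_ex (f : nat -> R) n : (1 <= n)%N ->
  exists i, (1 <= i <= n)%N /\ forall k, (1 <= k <= n)%N -> f k <= f i.
Proof.
elim: n => // n IH _; case: n IH => [|n] IH.
  by exists 1%N; split => // k kk; have -> : k = 1%N by lia.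
have [i [hi hk]] := IH isT.
case: (leP (f n.+2) (f i)) => h.
  exists i; split; first lia.
  move=> k /andP[k1 kn]; case: (ltngtP k n.+2) => [kl|kg|->]; [|lia|by []].
  by apply: hk; lia.
exists n.+2; split; first lia.
move=> k /andP[k1 kn]; case: (ltngtP k n.+2) => [kl|kg|->]; [|lia|by []].
by apply: le_trans (ltW h); apply: hk; lia.
Qed.

Lemma reserve_prop K x p : (1 <= K)%N ->
  let t := reserve_idx K x p in
  (1 <= t <= K)%N /\ forall k, (1 <= k <= K)%N -> x k * tailP p K k <= x t * tailP p K t.
Proof.
move=> K1 t.
have [i [hi hk]] := @argmax_ex (fun k => x k * tailP p K k) K K1.
have hP : has (fun i => all (fun k => (x k * tailP p K k <= x i * tailP p K i)%R) (index_iota 1 K.+1))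
   (index_iota 1 K.+1).
  apply/hasP; exists i; first by rewrite mem_index_iota; lia.
  by apply/allP => k; rewrite mem_index_iota => kk; apply: hk; lia.
move: (@max_filter _ _ hP); rewrite -/(reserve_idx K x p) -/t => /andP[/allP Pt].
rewrite mem_index_iota => tK; split; first lia.
by move=> k kk; apply: Pt; rewrite mem_index_iota; lia.
Qed.

Section Feasible.
Variables (r : R) (K N : nat) (p : nat -> R).
Hypothesis r1 : 1 < r.
Hypothesis K1 : (1 <= K)%N.
Hypothesis N1 : (1 <= N)%N.
Hypothesis ppos : forall i, (1 <= i <= K)%N -> 0 < p i.
Hypothesis psum : cumP p K = 1.
Hypothesis rp : 1 <= r * p K.
Let p0 : forall i, (1 <= i <= K)%N -> 0 <= p i.
Proof. by move=> i /ppos/ltW. Qed.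

Let zKp : 0 < zz N p K := @zzK_gt0 K p ppos psum N N1 K1.
Let Tp j : (1 <= j <= K)%N -> 0 < tailP p K j := @tail_gt0 K p ppos j.
Let cle1 i : (i <= K)%N -> cumP p i <= 1 := @cum_le1 K p ppos psum i.

Lemma pK_gt0 : 0 < p K. Proof. by apply: ppos; rewrite K1 leqnn. Qed.

Lemma tail_ge_pK j : (1 <= j <= K)%N -> p K <= tailP p K j.
Proof. by move=> /andP[j1 jK]; rewrite -(@tailK K p); apply: (@tail_le K p p0); lia. Qed.

Lemma gamma_ge0 : 0 <= gamma_obj K N p.
Proof.
rewrite /gamma_obj; apply: mulr_ge0; first apply: divr_ge0; first exact: ltW pK_gt0.
  exact: ltW zKp.
apply: sum_nat_ge0 => i /andP[i1 iK]; apply: divr_ge0.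
  by apply: (@zz_ge0 K p p0); lia.
by apply: ltW; apply: Tp; lia.
Qed.

Lemma gamma_le_r : gamma_obj K N p <= r.
Proof.
rewrite /gamma_obj -[r]mul1r; apply: ler_pM.
- apply: divr_ge0; first exact: ltW pK_gt0. exact: ltW zKp.
- apply: sum_nat_ge0 => i /andP[i1 iK]; apply: divr_ge0.
    by apply: (@zz_ge0 K p p0); lia.
  by apply: ltW; apply: Tp; lia.
- rewrite ler_pdivrMr ?mul1r; last exact: zKp.
  rewrite /zz psum expr1n lerBrDl -lerBrDr -(@cumKm1 K p psum K1).
  apply: ler_iXnr => //; first by apply: (@cum_ge0 K p p0); lia.
  by apply: cle1; lia.
- apply: (@le_trans _ _ (\sum_(1 <= i < K) r * zz N p i)).
    apply: ler_sum_nat => i /andP[i1 iK].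
    have Ti : 0 < tailP p K i by apply: Tp; lia.
    rewrite ler_pdivrMr // -[X in X <= _]mul1r mulrAC; apply: ler_wpM2r.
      by apply: (@zz_ge0 K p p0); lia.
    apply: le_trans rp _; apply: ler_wpM2l; first exact: ltW (lt_trans ltr01 r1).
    by apply: tail_ge_pK; lia.
  rewrite -mulr_sumr zz_sum //= cumP0 expr0n /=.
  case: N N1 => // n _; rewrite subr0 ler_piMr //; first exact: ltW (lt_trans ltr01 r1).
  apply: exprn_ile1; first by apply: (@cum_ge0 K p p0); lia.
  by apply: cle1; lia.
Qed.

Definition xlow (k : nat) : R := (tailP p K k)^-1.

Lemma xlow_support : is_support r K xlow.
Proof.
split; first by rewrite /xlow (@tail1 K p psum) invr1 ltr01.
split.
  move=> i /andP[i1 iK]; rewrite /xlow ltf_pV2 ?posrE; try (apply: Tp; lia).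
  rewrite (@tail_cum p K i.+1) ?(@tail_cum p K i) /=; try lia.
  case: i i1 iK => // i _ iK; rewrite cumPS /= ltrD2l ltrN2 ltrDl.
  by apply: ppos; lia.
by rewrite /xlow (@tail1 K p psum) invr1 mulr1 tailK -[(p K)^-1]mulr1 ler_pdivrMl ?pK_gt0 // mulrC.
Qed.

Lemma xlow_rev j : (1 <= j <= K)%N -> xlow j * tailP p K j = 1.
Proof. by move=> jj; rewrite /xlow mulVf // lt0r_neq0 // Tp. Qed.

Lemma xlow_reserve : reserve_idx K xlow p = K.
Proof.
set P := (fun i => all (fun k => (xlow k * tailP p K k <= xlow i * tailP p K i)%R) (index_iota 1 K.+1)).
have PK : P K.
  by apply/allP => k; rewrite mem_index_iota => kk; rewrite !xlow_rev //; lia.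
have hP : has P (index_iota 1 K.+1) by apply/hasP; exists K => //; rewrite mem_index_iota; lia.
move: (@max_filter _ _ hP) => /andP[_]; rewrite mem_index_iota -/(reserve_idx K xlow p) => h.
apply/eqP; rewrite eqn_leq; apply/andP; split; first lia.
by apply: (@leq_bigmax_seq _ _ P (fun i => i) K) => //; rewrite mem_index_iota; lia.
Qed.

Lemma xlow_ELR : ELR K N xlow p = gamma_obj K N p / (1 + gamma_obj K N p).
Proof.
rewrite /ELR xlow_reserve big_nat_recr //= /gamma_obj.
set S := \sum_(1 <= i < K) _.
have S0 : 0 <= S.
  apply: sum_nat_ge0 => i /andP[i1 iK]; apply: divr_ge0.
    by apply: (@zz_ge0 K p p0); lia.
  by apply: ltW; apply: Tp; lia.
have zK := zKp.
have pK := pK_gt0.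
rewrite /xlow tailK.
have h1 : zz N p K * (p K)^-1 > 0 by apply: divr_gt0.
have h2 : 0 < p K / zz N p K * S + 1.
  apply: ltr_wpDl => //; apply: mulr_ge0 => //; apply: divr_ge0; exact: ltW.
field; rewrite !lt0r_neq0 //; apply: ltr_wpDr => //; exact: mulr_ge0 (ltW pK) S0.
Qed.

End Feasible.

Section Collapse.
Variables (K N : nat) (p : nat -> R) (t : nat).
Hypothesis ppos : forall i, (1 <= i <= K)%N -> 0 < p i.
Hypothesis psum : cumP p K = 1.
Hypothesis t2 : (2 <= t)%N.
Hypothesis tK : (t <= K)%N.
Let p0 : forall i, (1 <= i <= K)%N -> 0 <= p i.
Proof. by move=> i /ppos/ltW. Qed.

Definition pc j := if (j < t.-1)%N then p j
  else if (j < K)%N then p t.-1 / (K - t.-1)%:R else tailP p K t.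

Lemma pc_cum_lo j : (j < t.-1)%N -> cumP pc j = cumP p j.
Proof.
move=> jt; rewrite /cumP; apply: eq_big_nat => k /andP[_ kj].
by rewrite /pc ifT //; lia.
Qed.

Lemma pc_cum_Km1 : cumP pc K.-1 = cumP p t.-1.
Proof.
rewrite (@cum_split pc t.-2 K.-1); last lia.
rewrite pc_cum_lo; last lia.
have -> : (t.-2).+1 = t.-1 by lia.
have -> : (K.-1).+1 = K by lia.
rewrite (eq_big_nat _ _ (F2 := fun _ => p t.-1 / (K - t.-1)%:R)); last first.
  move=> k /andP[k1 k2]; rewrite /pc ifF; last lia.
  by rewrite ifT //.
rewrite sumr_const_nat -(mulr_natr (p t.-1 / (K - t.-1)%:R) (K - t.-1)) divfK; last by rewrite pnatr_eq0; lia.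
have h : t.-1 = t.-2.+1 by lia.
by rewrite [in RHS]h cumPS -h.
Qed.

Lemma pc_K : pc K = tailP p K t.
Proof. by rewrite /pc ifF ?ltnn //; lia. Qed.

Lemma pc_sum : cumP pc K = 1.
Proof.
have h : K = K.-1.+1 by lia.
rewrite [in LHS]h cumPS -h pc_cum_Km1 pc_K (@tail_cum p K t); last lia.
by rewrite psum; ring.
Qed.

Lemma pc_pos i : (1 <= i <= K)%N -> 0 < pc i.
Proof.
move=> ii; rewrite /pc; case: ifP => h1; first by apply: ppos; lia.
case: ifP => h2; last by apply: (@tail_gt0 K p ppos); lia.
by apply: divr_gt0; [apply: ppos; lia | rewrite ltr0n; lia].
Qed.

Let pc0 : forall i, (1 <= i <= K)%N -> 0 <= pc i.
Proof. by move=> i /pc_pos/ltW. Qed.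

Lemma pc_tail_lo j : (1 <= j <= t.-1)%N -> tailP pc K j = tailP p K j.
Proof.
move=> jj; rewrite (@tail_cum pc K j); last lia.
rewrite (@tail_cum p K j); last lia.
by rewrite pc_sum psum pc_cum_lo //; lia.
Qed.

Lemma pc_zz_lo j : (1 <= j < t.-1)%N -> zz N pc j = zz N p j.
Proof. by move=> jj; rewrite /zz !pc_cum_lo //; lia. Qed.

Lemma pc_zzK : zz N pc K = 1 - cumP p t.-1 ^+ N.
Proof. by rewrite /zz pc_sum expr1n pc_cum_Km1. Qed.

Lemma pc_gamma : tailP p K t / (1 - cumP p t.-1 ^+ N) * \sum_(1 <= i < t) zz N p i / tailP p K i
   <= gamma_obj K N pc.
Proof.
rewrite /gamma_obj pc_K pc_zzK; apply: ler_wpM2l.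
  apply: divr_ge0; first by apply: ltW; apply: (@tail_gt0 K p ppos); lia.
  rewrite subr_ge0; apply: exprn_ile1; first by apply: (@cum_ge0 K p p0); lia.
  by apply: (@cum_le1 K p ppos psum); lia.
have ht : t = t.-1.+1 by lia.
rewrite [in X in X <= _]ht big_nat_recr /=; last lia.
rewrite [in X in _ <= X](big_cat_nat (n:=t.-1)) /=; try lia.
apply: lerD.
  by apply: ler_sum_nat => i ii; rewrite pc_zz_lo ?pc_tail_lo //; lia.
apply: (@le_trans _ _ (\sum_(t.-1 <= j < K) zz N pc j / tailP p K t.-1)).
  rewrite -mulr_suml zz_sum; last lia.
  by rewrite pc_cum_Km1 pc_cum_lo /zz //; lia.
apply: ler_sum_nat => j /andP[j1 j2]; apply: ler_wpM2l.
  by apply: (@zz_ge0 K pc pc0); lia.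
rewrite lef_pV2 ?posrE; first last.
- by apply: (@tail_gt0 K pc pc_pos); lia.
- by apply: (@tail_gt0 K p ppos); lia.
rewrite -pc_tail_lo; last lia.
by apply: (@tail_le K pc pc0); lia.
Qed.

End Collapse.

Section Upper.
Variables (r G : R) (K N : nat) (x p : nat -> R).
Hypothesis r1 : 1 < r.
Hypothesis K1 : (1 <= K)%N.
Hypothesis N1 : (1 <= N)%N.
Hypothesis ppos : forall i, (1 <= i <= K)%N -> 0 < p i.
Hypothesis psum : cumP p K = 1.
Hypothesis supp : is_support r K x.
Hypothesis G0 : 0 <= G.
Hypothesis Gub : forall q : nat -> R, (forall i, (1 <= i <= K)%N -> 0 < q i) -> cumP q K = 1 ->
  1 <= r * q K -> gamma_obj K N q <= G.

Lemma ELR_le : ELR K N x p <= G / (1 + G).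
Proof.
have p0 : forall i, (1 <= i <= K)%N -> 0 <= p i by move=> i /ppos/ltW.
have [ht targ] := @reserve_prop K x p K1.
rewrite /ELR; set t := reserve_idx K x p in ht targ *.
have G1 : 0 < 1 + G by apply: ltr_wpDr.
have [tle1|t2] := leqP t 1.
  have -> : t = 1%N by lia.
  by rewrite big_geq // mul0r; apply: divr_ge0 => //; apply: ltW.
have xpm := @supp_pos_mono r K x supp.
have xpos j : (1 <= j <= K)%N -> 0 < x j by move=> h; exact: (xpm j h).1.
have xmono i j : (1 <= i <= j)%N -> (j <= K)%N -> x i <= x j.
  by move=> h1 h2; apply: (xpm j _).2 => //; lia.
have x1 : 0 < x 1%N by apply: xpos; lia.
have Tt : 0 < tailP p K t by apply: (@tail_gt0 K p ppos); lia.
have rTt : 1 <= r * tailP p K t.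
  have h1 := targ 1%N ltac:(lia).
  rewrite (@tail1 K p psum) mulr1 in h1.
  have h2 : x t <= r * x 1%N.
    apply: le_trans supp.2.2; apply: xmono; lia.
  have h3 : x 1%N <= r * x 1%N * tailP p K t.
    apply: le_trans h1 _; apply: ler_wpM2r => //; exact: ltW.
  by rewrite -[X in X <= _]mul1r mulrAC ler_pM2r // in h3.
set Z := 1 - cumP p t.-1 ^+ N.
have Z0 : 0 < Z.
  rewrite /Z subr_gt0 exprn_ilt1; first by case: N N1.
    by apply: (@cum_ge0 K p p0); lia.
  apply: (@le_lt_trans _ _ (cumP p K.-1)).
    by apply: (@cum_le K p p0); lia.
  rewrite (@cumKm1 K p psum K1) ltrBlDr ltrDl; apply: ppos; lia.
set S := \sum_(1 <= i < t) zz N p i / tailP p K i.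
have gle : tailP p K t / Z * S <= G.
  apply: le_trans (@pc_gamma K N p t ppos psum t2 ltac:(lia)) _.
  apply: Gub.
  - exact: (@pc_pos K p t ppos t2 ltac:(lia)).
  - exact: (@pc_sum K p t psum t2 ltac:(lia)).
  - by rewrite (@pc_K K p t t2 ltac:(lia)).
rewrite [X in _ / X](big_cat_nat (n:=t)) /=; try lia.
set A := \sum_(1 <= i < t) _.
set B := \sum_(t <= i < K.+1) _.
have A0 : 0 <= A.
  apply: sum_nat_ge0 => i ii; apply: mulr_ge0.
    by apply: (@zz_ge0 K p p0); lia.
  by apply: ltW; apply: xpos; lia.
have hA : A <= x t * tailP p K t * S.
  rewrite /S mulr_sumr; apply: ler_sum_nat => i ii.
  have Ti : 0 < tailP p K i by apply: (@tail_gt0 K p ppos); lia.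
  have hx : x i <= x t * tailP p K t / tailP p K i.
    by rewrite ler_pdivlMr //; apply: targ; lia.
  have -> : x t * tailP p K t * (zz N p i / tailP p K i) = zz N p i * (x t * tailP p K t / tailP p K i).
    by rewrite mulrCA !mulrA.
  by apply: ler_wpM2l => //; apply: (@zz_ge0 K p p0); lia.
have hB : x t * Z <= B.
  have -> : Z = \sum_(t <= i < K.+1) zz N p i.
    by rewrite zz_sum /= ?psum ?expr1n //; lia.
  rewrite mulr_sumr; apply: ler_sum_nat => i ii; rewrite mulrC; apply: ler_wpM2l.
    by apply: (@zz_ge0 K p p0); lia.
  by apply: xmono; lia.
have xt : 0 < x t by apply: xpos; lia.
have B0 : 0 < B by apply: lt_le_trans hB; apply: mulr_gt0.
have AGB : A <= G * B.
  apply: le_trans hA _.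
  have -> : x t * tailP p K t * S = x t * Z * (tailP p K t / Z * S).
    by field; rewrite lt0r_neq0.
  apply: (@le_trans _ _ (x t * Z * G)).
    by apply: ler_wpM2l => //; apply: ltW; apply: mulr_gt0.
  by rewrite mulrC; apply: ler_wpM2l.
rewrite ler_pdivrMr; last by apply: ltr_wpDl.
rewrite mulrAC ler_pdivlMr //.
have -> : A * (1 + G) = A + G * A by ring.
have -> : G * (A + B) = G * B + G * A by ring.
by rewrite lerD2r.
Qed.

End Upper.

Lemma witness (r : R) (K : nat) : 1 < r -> (1 <= K)%N ->
  exists q : nat -> R, (forall i, (1 <= i <= K)%N -> 0 < q i) /\ cumP q K = 1 /\ 1 <= r * q K.
Proof.
move=> r1 K1.
set a : R := K.-1%:R.
have a0 : 0 <= a by [].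
have r0 : 0 < r by apply: lt_trans r1.
set s := r^-1.
have s0 : 0 < s by rewrite /s invr_gt0.
have s1 : s < 1 by rewrite /s invf_lt1.
have a1 : 0 < a + 1 by apply: ltr_wpDl.
set c := (1 - s) / (a + 1).
have c0 : 0 < c by apply: divr_gt0 => //; rewrite subr_gt0.
exists (fun j => if (j < K)%N then c else 1 - a * c).
have qK : 1 - a * c = (1 + a * s) / (a + 1).
  by rewrite /c; field; rewrite lt0r_neq0.
have qK0 : 0 < 1 - a * c.
  rewrite qK; apply: divr_gt0 => //; apply: ltr_pwDl => //; exact: mulr_ge0 (ltW s0).
split.
  by move=> i _; case: ifP.
split.
  have h : K = K.-1.+1 by lia.
  rewrite [in cumP _ K]h cumPS -h ltnn.
  rewrite /cumP (eq_big_nat _ _ (F2 := fun _ => c)); last first.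
    by move=> k kk; rewrite ifT //; lia.
  rewrite sumr_const_nat -(mulr_natr c) subn1 -/a; ring.
rewrite ltnn qK mulrA ler_pdivlMr // mul1r.
have -> : r * (1 + a * s) = r + a by rewrite /s; field; rewrite lt0r_neq0.
by rewrite addrC lerD2r ltW.
Qed.
End S.
Local Open Scope classical_set_scope.

Theorem lemma2 (R : realType) (r : R) (K N : nat) :
  1 < r -> (1 <= K)%N -> (1 <= N)%N ->
  eta_ELR r K N = gamma_sup r K N / (1 + gamma_sup r K N).
Proof.
move=> r1 K1 N1.
rewrite /eta_ELR /gamma_sup.
set Sg := [set g | exists p, is_prob K p /\ 1 <= r * p K /\ g = gamma_obj K N p].
set Se := [set e | exists x p, is_prob K p /\ is_support r K x /\ e = ELR K N x p].
have [q [qpos [qsum qr]]] := @witness R r K r1 K1.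
have Sgq : Sg (gamma_obj K N q) by exists q; split => //; split.
have hSg : has_sup Sg.
  split; first by exists (gamma_obj K N q).
  exists r => g [p [[ppos psum] [rp ->]]].
  exact: (@gamma_le_r R r K N p r1 K1 N1 ppos psum rp).
set G := sup Sg.
have Gub : forall p : nat -> R, (forall i, (1 <= i <= K)%N -> 0 < p i) -> cumP p K = 1 ->
    1 <= r * p K -> gamma_obj K N p <= G.
  move=> p ppos psum rp; apply: sup_upper_bound => //.
  by exists p; split => //; split.
have G0 : 0 <= G.
  apply: le_trans (Gub q qpos qsum qr).
  exact: (@gamma_ge0 R r K N q r1 K1 N1 qpos qsum qr).
have G1 : 0 < 1 + G by apply: ltr_wpDr.
have Seub : forall e, Se e -> e <= G / (1 + G).
  move=> e [x [p [[ppos psum] [supp ->]]]].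
  exact: (@ELR_le R r G K N x p r1 K1 N1 ppos psum supp G0 Gub).
have Seq : Se (gamma_obj K N q / (1 + gamma_obj K N q)).
  exists (xlow R K q), q; split; first by split.
  split; first exact: (@xlow_support R r K N q r1 K1 N1 qpos qsum qr).
  by rewrite (@xlow_ELR R r K N q r1 K1 N1 qpos qsum qr).
have hSe : has_sup Se.
  by split; [exists (gamma_obj K N q / (1 + gamma_obj K N q)) | exists (G / (1 + G))].
set e := sup Se.
have eup : e <= G / (1 + G) by apply: ge_sup => //; exists (gamma_obj K N q / (1 + gamma_obj K N q)).
have e1 : e < 1.
  apply: le_lt_trans eup _; rewrite ltr_pdivrMr // mul1r ltrDr; exact: ltr01.
have e0 : 0 < 1 - e by rewrite subr_gt0.
have GS : G <= e / (1 - e).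
  apply: ge_sup; first by exists (gamma_obj K N q).
  move=> g [p [[ppos psum] [rp ->]]].
  have g0 := @gamma_ge0 R r K N p r1 K1 N1 ppos psum rp.
  have hg : gamma_obj K N p / (1 + gamma_obj K N p) <= e.
    apply: sup_upper_bound => //; exists (xlow R K p), p; split; first by split.
    split; first exact: (@xlow_support R r K N p r1 K1 N1 ppos psum rp).
    by rewrite (@xlow_ELR R r K N p r1 K1 N1 ppos psum rp).
  have g1 : 0 < 1 + gamma_obj K N p by apply: ltr_wpDr.
  rewrite ler_pdivrMr // in hg; rewrite ler_pdivlMr //.
  move: hg; set gg := gamma_obj K N p => hg.
  have -> : gg * (1 - e) = gg - e * gg by ring.
  rewrite lerBlDr; apply: le_trans hg _.
  by rewrite mulrDr mulr1 addrC.
apply/le_anti/andP; split => //.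
rewrite ler_pdivrMr //; rewrite ler_pdivlMr // in GS.
have -> : e * (1 + G) = e + e * G by ring.
rewrite -lerBlDr.
by have -> : G - e * G = G * (1 - e) by ring.
Qed.
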